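(* Suppose $\rho^w$ is one-step coherently decomposable and satisfies the bounded conditional market risk assumption. Then, for an American option (with or without the buyer's commitment to an exercise strategy), it is optimal for the writer to terminate the hedging strategy at the exact moment the option is exercised, i.e. there is a minimal-risk hedging policy with $\hat\xi^{i}_k=0$ for all $i\le k$, so that the position $\xi_k\mathbf{1}\{\tau>k\}+\sum_{i=0}^k\hat\xi^i_k\mathbf{1}\{\tau=i\}$ is zero whenever $\tau\le k$. The same applies to the buyer when $\rho^b$ is one-step coherently decomposable and satisfies the bounded conditional market risk assumption.
   Context: Discrete-time setting: filtered probability space $(\Omega,\mathcal{F},(\mathcal{F}_t),\mathbb{P})$, zero interest rate, risky asset with $S_k:=S_{t_k}$ at trading dates $t_0<\dots<t_{K-1}<t_K=T$, $\Delta S_{k+1}=S_{k+1}-S_k$, adapted auxiliary process $Y_k$; variables in $\mathcal{L}_p$ for some $p\in[1,\infty]$. Exercise times are stopping times $\tau:\Omega\to\{0,\dots,K\}$; payoff $F(S_\tau,Y_\tau)=\sum_k\mathbf{1}\{\tau=k\}F(S_k,Y_k)$. Self-financing strategies: $X^\tau_0=p_0$, $X^\tau_{k+1}=X^\tau_k+(\xi_k\mathbf{1}\{\tau>k\}+\sum_{i=0}^k\hat\xi^i_k\mathbf{1}\{\tau=i\})\Delta S_{k+1}$ with $\xi_k,\hat\xi^i_k$ $\mathcal{F}_{t_k}$-measurable ($\hat\xi^i_k$ is the position held at $k$ after exercise at $i$). The writer minimizes $\rho^w(F(S_\tau,Y_\tau)-X^\tau_K)$ over strategies (for a committed $\tau$,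 or against the worst $\tau$ without commitment); the buyer minimizes $\rho^b(-F(S_\tau,Y_\tau)-X^\tau_K)$ over strategies and $\tau$. A conditional risk mapping $\rho_k:\mathcal{L}_p(\Omega,\mathcal{F}_{t_{k+1}},\mathbb{P})\to\mathcal{L}_p(\Omega,\mathcal{F}_{t_k},\mathbb{P})$ is conditionally convex, monotone and translation invariant; $\rho$ is one-step coherently decomposable if $\rho=\rho_0\circ\cdots\circ\rho_{K-1}$ for such mappings which are moreover conditionally scale invariant ($\rho_k(\alpha X)=\alpha\rho_k(X)$ for $\alpha\ge0$). Bounded conditional market risk: with $\rho_{k,K}:=\rho_k\circ\cdots\circ\rho_{K-1}$, for each $k$, $0\ge\inf_{\xi_k,\dots,\xi_{K-1}}\rho_{k,K}(-\sum_{\ell=k}^{K-1}\xi_\ell\Delta S_{\ell+1})>-\infty$ a.s. (and $=0$ when conditionally scale invariant). *)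

(* Defs.v *)
From HB Require Import structures.
From mathcomp Require Import all_boot all_order all_algebra.
From mathcomp Require Import all_classical all_reals all_analysis.
Set Implicit Arguments. Unset Strict Implicit. Unset Printing Implicit Defensive.
Import Order.TTheory GRing.Theory Num.Theory.
Import numFieldNormedType.Exports.
Local Open Scope classical_set_scope.
Local Open Scope ring_scope.

Section Defs.
Context {d : measure_display} {T : measurableType d} {R : realType}.
Variable P : probability T R.

Definition is_filtration (F : nat -> set (set T)) : Prop :=
  forall k, [/\ sigma_algebra setT (F k), F k `<=` measurable & F k `<=` F k.+1].

Definition meas_in (G : set (set T)) (f : T -> R) : Prop :=
  @measurable_fun _ _ (g_sigma_algebraType G) R setT f.

Definition Lp_in (p : \bar R) (G : set (set T)) (f : T -> R) : Prop :=
  meas_in G f /\ ('N[P]_p[EFin \o f] < +oo)%E.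

Definition ae_le (f g : T -> R) : Prop := {ae P, forall w, f w <= g w}.
Definition ae_eq (f g : T -> R) : Prop := {ae P, forall w, f w = g w}.

Definition coherent_cond_risk_map (p : \bar R) (F : nat -> set (set T)) (k : nat)
    (r : (T -> R) -> (T -> R)) : Prop :=
  [/\ (forall X, Lp_in p (F k.+1) X -> Lp_in p (F k) (r X)),
      (forall X Y, Lp_in p (F k.+1) X -> Lp_in p (F k.+1) Y ->
         ae_le X Y -> ae_le (r X) (r Y)),
      (forall X m, Lp_in p (F k.+1) X -> Lp_in p (F k) m ->
         ae_eq (r (X \+ m)) (r X \+ m)),
      (forall X Y (l : T -> R), Lp_in p (F k.+1) X -> Lp_in p (F k.+1) Y ->
         meas_in (F k) l -> (forall w, 0 <= l w <= 1) ->
         ae_le (r (fun w => l w * X w + (1 - l w) * Y w))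
               (fun w => l w * r X w + (1 - l w) * r Y w)) &
      (forall X (a : T -> R), Lp_in p (F k.+1) X ->
         meas_in (F k) a -> (forall w, 0 <= a w) -> (exists M : R, forall w, a w <= M) ->
         ae_eq (r (a \* X)) (a \* r X))].

Definition rho_comp (rk : nat -> (T -> R) -> (T -> R)) (j K : nat) (X : T -> R) : T -> R :=
  foldr (fun k acc => rk k acc) X (iota j (K - j)).

Definition gains (S : nat -> T -> R) (xi : nat -> T -> R) (j K : nat) : T -> R :=
  fun w => \sum_(j <= l < K) xi l w * (S l.+1 w - S l w).

Definition admissible_from (p : \bar R) (F : nat -> set (set T)) (S : nat -> T -> R)
    (j K : nat) (xi : nat -> T -> R) : Prop :=
  forall l, (j <= l < K)%N ->
    meas_in (F l) (xi l) /\ Lp_in p (F l.+1) (fun w => xi l w * (S l.+1 w - S l w)).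

(** bounded conditional market risk: for each k, ess inf over strategies of
    rho_{k,K}(- sum_{l>=k} xi_l Delta S_{l+1}) is > -oo a.s., i.e. admits an
    a.s. real lower bound *)
Definition bounded_cond_market_risk (p : \bar R) (F : nat -> set (set T))
    (S : nat -> T -> R) (K : nat) (rk : nat -> (T -> R) -> (T -> R)) : Prop :=
  forall k, (k < K)%N -> exists L : T -> R,
    forall xi, admissible_from p F S k K xi ->
      ae_le L (rho_comp rk k K (fun w => - gains S xi k K w)).

Definition one_step_coherent_decomposition (p : \bar R) (F : nat -> set (set T))
    (K : nat) (rho : (T -> R) -> (T -> R)) (rk : nat -> (T -> R) -> (T -> R)) : Prop :=
  (forall k, (k < K)%N -> coherent_cond_risk_map p F k (rk k)) /\
  (forall X, Lp_in p (F K) X -> ae_eq (rho X) (rho_comp rk 0 K X)).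

Definition good_risk_measure (p : \bar R) (F : nat -> set (set T)) (S : nat -> T -> R)
    (K : nat) (rho : (T -> R) -> (T -> R)) : Prop :=
  exists rk, one_step_coherent_decomposition p F K rho rk /\
             bounded_cond_market_risk p F S K rk.

Definition stopping_time (F : nat -> set (set T)) (K : nat) (tau : T -> nat) : Prop :=
  (forall w, (tau w <= K)%N) /\ (forall k, (k <= K)%N -> F k [set w | tau w = k]).

(** self-financing strategy (xi, xih): xi_k used before exercise, xih i k the
    position held at k after exercise at i (i <= k); both F_k-measurable *)
Definition admissible_strategy (p : \bar R) (F : nat -> set (set T)) (S : nat -> T -> R)
    (K : nat) (xi : nat -> T -> R) (xih : nat -> nat -> T -> R) : Prop :=
  admissible_from p F S 0 K xi /\
  (forall i, (i < K)%N -> admissible_from p F S i K (xih i)).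

(** the position held over (t_k, t_{k+1}] *)
Definition position (tau : T -> nat) (xi : nat -> T -> R) (xih : nat -> nat -> T -> R)
    (k : nat) : T -> R :=
  fun w => xi k w * (k < tau w)%N%:R + \sum_(0 <= i < k.+1) xih i k w * (tau w == i)%:R.

Definition wealth (S : nat -> T -> R) (K : nat) (p0 : R) (tau : T -> nat)
    (xi : nat -> T -> R) (xih : nat -> nat -> T -> R) : T -> R :=
  fun w => p0 + gains S (position tau xi xih) 0 K w.

Definition payoff_at {U : Type} (Fp : R -> U -> R) (S : nat -> T -> R) (Y : nat -> T -> U)
    (K : nat) (tau : T -> nat) : T -> R :=
  fun w => \sum_(0 <= k < K.+1) (tau w == k)%:R * Fp (S k w) (Y k w).

Definition no_post_exercise : nat -> nat -> T -> R := fun _ _ _ => 0.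

End Defs.

(* Main.v *)
Require Import Defs.
From HB Require Import structures.
From mathcomp Require Import all_boot all_order all_algebra.
From mathcomp Require Import all_classical all_reals all_analysis.
From mathcomp Require Import ess_sup_inf measurable_realfun zify ring.
Set Implicit Arguments. Unset Strict Implicit. Unset Printing Implicit Defensive.
Import Order.TTheory GRing.Theory Num.Theory.
Local Open Scope classical_set_scope.
Local Open Scope ring_scope.


Section Aux.
Context (d : measure_display) (T : measurableType d) (R : realType).
Variable (P : probability T R) (p : \bar R).
Hypothesis p1 : (1 <= p)%E.

Lemma meas_T (G : set (set T)) (f : T -> R) : G `<=` measurable -> meas_in G f ->
  measurable_fun setT f.
Proof.
move=> GM mf _ Y mY; have := mf measurableT Y mY.
apply: smallest_sub => //; exact: sigma_algebra_measurable.
Qed.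

Lemma meas_mono (G G' : set (set T)) (f : T -> R) : G `<=` G' -> meas_in G f -> meas_in G' f.
Proof.
move=> GG mf _ Y mY; have := mf measurableT Y mY.
exact: sub_sigma_algebra2.
Qed.

Lemma Lnorm_le (f g : T -> R) : measurable_fun setT f -> measurable_fun setT g ->
  (forall x, `|f x| <= `|g x|) -> ('N[P]_p[EFin \o f] <= 'N[P]_p[EFin \o g])%E.
Proof.
move=> mf mg fg; move: p1; case: p => [r r1|_|//].
- rewrite unlock /Lnorm.
  have r0 : (0 <= r)%R by rewrite lee_fin in r1; exact: le_trans r1.
  apply: gt0_ler_poweR; first by rewrite invr_ge0.

  + by rewrite in_itv /= leey andbT integral_ge0// => x _; exact: poweR_ge0.
  + by rewrite in_itv /= leey andbT integral_ge0// => x _; exact: poweR_ge0.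
  apply: ge0_le_integral => //.
  + by move=> x _; exact: poweR_ge0.
  + have -> : (fun x => (`|(EFin \o f) x| `^ r)%E) = EFin \o (fun x => `|f x| `^ r).
      by apply/funext => x /=.
    apply/measurable_EFinP; apply: (@measurableT_comp _ _ _ _ _ _ (@powR R ^~ r)) => //; exact: measurableT_comp.
  + have -> : (fun x => (`|(EFin \o g) x| `^ r)%E) = EFin \o (fun x => `|g x| `^ r).
      by apply/funext => x /=.
    apply/measurable_EFinP; apply: (@measurableT_comp _ _ _ _ _ _ (@powR R ^~ r)) => //; exact: measurableT_comp.
  move=> x _ /=; rewrite lee_fin; apply: ge0_ler_powR => //.
- rewrite unlock /Lnorm; case: ifPn => // _; apply: le_ess_sup.
  by apply: nearW => x /=; rewrite lee_fin.
Qed.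


Lemma meas_bool (G : set (set T)) (b : T -> bool) :
  @measurable _ (g_sigma_algebraType G) [set w | b w] -> meas_in G (fun w => (b w)%:R : R).
Proof.
move=> mb.
have -> : (fun w => (b w)%:R : R) = \1_[set w | b w].
  apply/funext => x; rewrite indicE; case bx: (b x); first by rewrite mem_set.
  by rewrite memNset //= bx.
exact: measurable_indic.
Qed.

Lemma Lp_meas G f : Lp_in P p G f -> meas_in G f.
Proof. by case. Qed.

Lemma Lp_le G f g : G `<=` measurable -> meas_in G f -> Lp_in P p G g ->
  (forall x, `|f x| <= `|g x|) -> Lp_in P p G f.
Proof.
move=> GM mf [mg lg] fg; split => //.
apply: le_lt_trans lg; apply: Lnorm_le => //; [exact: meas_T GM mf|exact: meas_T GM mg].
Qed.

Lemma Lp_add G f g : G `<=` measurable -> Lp_in P p G f -> Lp_in P p G g ->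
  Lp_in P p G (f \+ g).
Proof.
move=> GM [mf lf] [mg lg]; split; first exact: measurable_funD.
apply: (le_lt_trans (eminkowski P (meas_T GM mf) (meas_T GM mg) p1)).
by rewrite lte_add_pinfty.
Qed.

Lemma Lp_opp G f : G `<=` measurable -> Lp_in P p G f -> Lp_in P p G (\- f).
Proof.
move=> GM Lf; apply: (Lp_le GM _ Lf); first exact: measurable_funN (Lp_meas Lf).
by move=> x; rewrite /= normrN.
Qed.

Lemma Lp_cst G (c : R) : Lp_in P p G (fun _ => c).
Proof.
split; first exact: measurable_cst.
move: p1; case: p => [r r1|_|//].
- by move: (Lfun_cst P c r); rewrite inE => /andP[_]; rewrite inE.
- rewrite unlock /Lnorm; case: ifPn => // _.
  rewrite (@ess_sup_ae_cst _ _ _ _ _ `|c|%:E) ?ltry//.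
    by have := probability_setT P; move=> /= ->; rewrite lte01.
  exact: nearW.
Qed.

Lemma Lp_sum G (s : seq nat) (f : nat -> T -> R) : G `<=` measurable ->
  (forall i, i \in s -> Lp_in P p G (f i)) ->
  Lp_in P p G (fun w => \sum_(i <- s) f i w).
Proof.
move=> GM; elim: s => [|x s IH] Hs.
  under eq_fun do rewrite big_nil; exact: Lp_cst.
have -> : (fun w => \sum_(i <- x :: s) f i w) = f x \+ (fun w => \sum_(i <- s) f i w).
  by apply/funext => w; rewrite big_cons.
apply: Lp_add => //; first by apply: Hs; rewrite inE eqxx.
by apply: IH => i si; apply: Hs; rewrite inE si orbT.
Qed.

Lemma Lp_bool_mul G (b : T -> bool) f : G `<=` measurable ->
  @measurable _ (g_sigma_algebraType G) [set w | b w] -> Lp_in P p G f ->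
  Lp_in P p G (fun w => (b w)%:R * f w).
Proof.
move=> GM mb Lf; apply: (Lp_le GM _ Lf).
  exact: measurable_funM (meas_bool mb) (Lp_meas Lf).
by move=> x; case: (b x); rewrite ?mul1r ?mul0r ?normr0.
Qed.

Lemma Lp_bdd_mul G (a f : T -> R) (M : R) : G `<=` measurable ->
  meas_in G a -> (forall w, `|a w| <= M) -> Lp_in P p G f -> Lp_in P p G (a \* f).
Proof.
move=> GM ma aM Lf.
have LN := @Lp_sum G (index_iota 0 (Num.trunc M).+1) (fun _ => f) GM (fun _ _ => Lf).
apply: (Lp_le GM _ LN); first exact: measurable_funM (Lp_meas Lf).
move=> x /=; rewrite sumr_const_nat subn0 normrMn normrM -mulr_natl.
apply: ler_wpM2r => //; apply: le_trans (aM x) _.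
exact/ltW/truncnS_gt.
Qed.

Lemma Lp_mono G G' f : G `<=` G' -> Lp_in P p G f -> Lp_in P p G' f.
Proof. by move=> GG [mf lf]; split => //; exact: meas_mono mf. Qed.

End Aux.

Section AE.
Context (d : measure_display) (T : measurableType d) (R : realType).
Variable (P : probability T R).

Lemma ae1 (A B : T -> Prop) : (forall w, A w -> B w) ->
  (\forall w \ae P, A w) -> \forall w \ae P, B w.
Proof. by move=> h; apply: filterS. Qed.

Lemma ae2 (A B C : T -> Prop) : (forall w, A w -> B w -> C w) ->
  (\forall w \ae P, A w) -> (\forall w \ae P, B w) -> \forall w \ae P, C w.
Proof. by move=> h HA HB; apply: filterS2 HA HB. Qed.

Lemma ae3 (A B C D : T -> Prop) : (forall w, A w -> B w -> C w -> D w) ->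
  (\forall w \ae P, A w) -> (\forall w \ae P, B w) -> (\forall w \ae P, C w) ->
  \forall w \ae P, D w.
Proof. by move=> h HA HB HC; apply: filterS3 HA HB HC. Qed.

Lemma aeT (A : T -> Prop) : (forall w, A w) -> \forall w \ae P, A w.
Proof. by move=> h; apply: nearW. Qed.

End AE.


Lemma back_ind (E : nat) (Q : nat -> Prop) : Q E ->
  (forall j, (j < E)%N -> Q j.+1 -> Q j) -> forall j, (j <= E)%N -> Q j.
Proof.
move=> QE QS; suff H : forall n j, (E - j)%N = n -> (j <= E)%N -> Q j.
  by move=> j hj; exact: H.
elim=> [|n IH] j e hj.
  by have -> : j = E by apply/eqP; rewrite eqn_leq hj /= -subn_eq0 e.
have hjE : (j < E)%N by rewrite -subn_gt0 e.
apply: QS => //; apply: IH => //.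
by rewrite subnS e.
Qed.

Lemma aeq_le d (T : measurableType d) (R : realType) (P : probability T R) (X Y : T -> R) :
  Defs.ae_eq P X Y -> Defs.ae_le P X Y.
Proof. by apply: ae1 => w ->. Qed.

Lemma aeq_sym d (T : measurableType d) (R : realType) (P : probability T R) (X Y : T -> R) :
  Defs.ae_eq P X Y -> Defs.ae_eq P Y X.
Proof. by apply: ae1 => w ->. Qed.

Lemma ae_antisym d (T : measurableType d) (R : realType) (P : probability T R) (X Y : T -> R) :
  Defs.ae_le P X Y -> Defs.ae_le P Y X -> Defs.ae_eq P X Y.
Proof. by apply: ae2 => w a b; apply/eqP; rewrite eq_le a b. Qed.

Section RC.
Context (d : measure_display) (T : measurableType d) (R : realType).
Variable (P : probability T R) (p : \bar R).
Hypothesis p1 : (1 <= p)%E.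
Variable (F : nat -> set (set T)).
Hypothesis hF : is_filtration F.
Variable (K : nat) (rk : nat -> (T -> R) -> (T -> R)).
Hypothesis hrk : forall k, (k < K)%N -> coherent_cond_risk_map P p F k (rk k).

Local Notation Lpk k f := (Lp_in P p (F k) f).
Local Notation rc := (rho_comp rk).

Lemma FM k : F k `<=` measurable.
Proof. by case: (hF k). Qed.

Lemma Fmono j k : (j <= k)%N -> F j `<=` F k.
Proof.
elim: k => [|k IH]; first by rewrite leqn0 => /eqP ->.
rewrite leq_eqVlt => /predU1P[->//|]; rewrite ltnS => /IH jk.
by apply: subset_trans jk _; case: (hF k).
Qed.

Lemma Fmeas k A : F k A -> @measurable _ (g_sigma_algebraType (F k)) A.
Proof. exact: sub_sigma_algebra. Qed.

Lemma Lpk_mono j k f : (j <= k)%N -> Lpk j f -> Lpk k f.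
Proof. by move=> jk; apply: Lp_mono; exact: Fmono. Qed.

Lemma meas_k_mono j k (f : T -> R) : (j <= k)%N -> meas_in (F j) f -> meas_in (F k) f.
Proof. by move=> jk; apply: meas_mono; exact: Fmono. Qed.

Lemma rcS j E X : (j < E)%N -> rc j E X = rk j (rc j.+1 E X).
Proof. by move=> jE; rewrite /rho_comp -(subnSK jE). Qed.

Lemma rcE E X : rc E E X = X.
Proof. by rewrite /rho_comp subnn. Qed.

Lemma rc_split j m E X : (j <= m)%N -> (m <= E)%N -> rc j E X = rc j m (rc m E X).
Proof.
move=> jm mE; rewrite /rho_comp.
have -> : (E - j = (m - j) + (E - m))%N by lia.
by rewrite iotaD foldr_cat subnKC.
Qed.

Lemma rc_Lp E j X : (E <= K)%N -> (j <= E)%N -> Lpk E X -> Lpk j (rc j E X).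
Proof.
move=> EK jE LX; move: j jE; apply: back_ind; first by rewrite rcE.
move=> j jE IH; rewrite rcS//.
by case: (hrk (leq_trans jE EK)) => h _ _ _ _; exact: h.
Qed.

Lemma rk_ae k X Y : (k < K)%N -> Lpk k.+1 X -> Lpk k.+1 Y ->
  Defs.ae_eq P X Y -> Defs.ae_eq P (rk k X) (rk k Y).
Proof.
move=> kK LX LY XY; case: (hrk kK) => _ hm _ _ _.
have h1 := hm X Y LX LY (aeq_le XY).
have h2 := hm Y X LY LX (aeq_le (aeq_sym XY)).
exact: ae_antisym h1 h2.
Qed.

Lemma rc_mono E j X Y : (E <= K)%N -> (j <= E)%N -> Lpk E X -> Lpk E Y ->
  Defs.ae_le P X Y -> Defs.ae_le P (rc j E X) (rc j E Y).
Proof.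
move=> EK jE LX LY XY; move: j jE; apply: back_ind; first by rewrite !rcE.
move=> j jE IH; rewrite !(rcS _ jE).
case: (hrk (leq_trans jE EK)) => _ hm _ _ _.
exact: (hm _ _ (rc_Lp EK jE LX) (rc_Lp EK jE LY) IH).
Qed.

Lemma rc_ae E j X Y : (E <= K)%N -> (j <= E)%N -> Lpk E X -> Lpk E Y ->
  Defs.ae_eq P X Y -> Defs.ae_eq P (rc j E X) (rc j E Y).
Proof.
move=> EK jE LX LY XY.
have h1 := rc_mono EK jE LX LY (aeq_le XY).
have h2 := rc_mono EK jE LY LX (aeq_le (aeq_sym XY)).
exact: ae_antisym h1 h2.
Qed.

Lemma rc_transl E j X m : (E <= K)%N -> (j <= E)%N -> Lpk E X -> Lpk j m ->
  Defs.ae_eq P (rc j E (X \+ m)) (rc j E X \+ m).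
Proof.
move=> EK jE LX Lm; move: j jE Lm; apply: back_ind.
  by move=> _; rewrite !rcE; apply: aeT.
move=> j jE IH Lm; rewrite !(rcS _ jE).
have jK := leq_trans jE EK.
have Lm1 : Lpk j.+1 m by apply: Lpk_mono Lm.
have LmE : Lpk E m by apply: Lpk_mono Lm; exact: ltnW.
have L1 : Lpk j.+1 (rc j.+1 E (X \+ m)) by exact: rc_Lp EK jE (Lp_add p1 (@FM E) LX LmE).
have L2 := Lp_add p1 (@FM j.+1) (rc_Lp EK jE LX) Lm1.
have h1 := rk_ae jK L1 L2 (IH Lm1).
case: (hrk jK) => _ _ htr _ _.
have h2 := htr _ _ (rc_Lp EK jE LX) Lm.
by apply: ae2 h1 h2 => w -> ->.
Qed.

Lemma rc_scale E j X a : (E <= K)%N -> (j <= E)%N -> Lpk E X -> meas_in (F j) a ->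
  (forall w, 0 <= a w) -> (exists M : R, forall w, a w <= M) ->
  Defs.ae_eq P (rc j E (a \* X)) (a \* rc j E X).
Proof.
move=> EK jE LX ma a0 [M aM].
have aM' : forall w, `|a w| <= M by move=> w; rewrite ger0_norm.
move: j jE ma; apply: back_ind.
  by move=> _; rewrite !rcE; apply: aeT.
move=> j jE IH ma; rewrite !(rcS _ jE).
have jK := leq_trans jE EK.
have ma1 : meas_in (F j.+1) a by apply: meas_k_mono ma.
have maE : meas_in (F E) a by apply: meas_k_mono ma; exact: ltnW.
have L1 : Lpk j.+1 (rc j.+1 E (a \* X)).
  by exact: rc_Lp EK jE (Lp_bdd_mul p1 (@FM E) maE aM' LX).
have L2 := Lp_bdd_mul p1 (@FM j.+1) ma1 aM' (rc_Lp EK jE LX).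
have h1 := rk_ae jK L1 L2 (IH ma1).
case: (hrk jK) => _ _ _ _ hsc.
have h2 := hsc _ _ (rc_Lp EK jE LX) ma a0 (ex_intro _ M aM).
by apply: ae2 h1 h2 => w -> ->.
Qed.

End RC.


Lemma sum_ind (R : realType) (t l : nat) (f : nat -> R) :
  \sum_(0 <= i < l.+1) f i * (t == i)%:R = (t <= l)%N%:R * f t.
Proof.
case: (leqP t l) => h.
  have ut : uniq (index_iota 0 l.+1) by rewrite /index_iota iota_uniq.
  have tin : t \in index_iota 0 l.+1 by rewrite mem_index_iota.
  rewrite (bigD1_seq t tin ut) /=.
  rewrite eqxx mulr1 big1_seq ?addr0 ?mul1r //.
  by move=> i /andP[ne _]; rewrite eq_sym (negbTE ne) mulr0.
rewrite mul0r big1_seq // => i /andP[_]; rewrite mem_index_iota => /andP[_ il].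
have ti : (t == i) = false by apply/negbTE; rewrite neq_ltn (leq_trans il h) orbT.
by rewrite ti mulr0.
Qed.

Lemma pos_eq d (T : measurableType d) (R : realType) (tau : T -> nat) (xi : nat -> T -> R)
  (z : nat -> nat -> T -> R) l w :
  position tau xi z l w = xi l w * (l < tau w)%N%:R + (tau w <= l)%N%:R * z (tau w) l w.
Proof. by rewrite /position sum_ind. Qed.

Section Main.
Context (d : measure_display) (T : measurableType d) (R : realType).
Variable (P : probability T R) (p : \bar R).
Hypothesis p1 : (1 <= p)%E.
Variable (F : nat -> set (set T)).
Hypothesis hF : is_filtration F.
Variables (K : nat) (S : nat -> T -> R).
Variable (rk : nat -> (T -> R) -> (T -> R)).
Hypothesis hrk : forall k, (k < K)%N -> coherent_cond_risk_map P p F k (rk k).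
Hypothesis hbmr : bounded_cond_market_risk P p F S K rk.
Variables (tau : T -> nat) (xi : nat -> T -> R) (xih : nat -> nat -> T -> R) (p0 : R).
Hypothesis htau : stopping_time F K tau.
Hypothesis hadm : admissible_strategy P p F S K xi xih.
Variables (H : T -> R) (Hm : nat -> T -> R).
Hypothesis hHm : forall m, (m <= K)%N -> Lp_in P p (F m) (Hm m).
Hypothesis hH : forall w, H w = Hm (tau w) w.

Local Notation Lpk k f := (Lp_in P p (F k) f).
Local Notation rc := (rho_comp rk).
Local Notation gmeas k A := (@measurable _ (g_sigma_algebraType (F k)) A).

Lemma gmeas_mono j k A : (j <= k)%N -> gmeas j A -> gmeas k A.
Proof. by move=> jk; apply: sub_sigma_algebra2; exact: Fmono. Qed.

Lemma tau_le w : (tau w <= K)%N.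
Proof. by case: htau. Qed.

Lemma meas_tau_eq i k : (i <= k)%N -> gmeas k [set w | tau w == i].
Proof.
move=> ik; case: (leqP i K) => iK.
  have h : F i [set w | tau w = i] by case: htau => _; apply.
  have -> : [set w | tau w == i] = [set w | tau w = i].
    by apply/seteqP; split => w /= /eqP.
  apply: gmeas_mono ik _; exact: sub_sigma_algebra.
have -> : [set w | tau w == i] = set0.
  apply/seteqP; split => w //= /eqP e; have := tau_le w; rewrite e => h.
  by move: (leq_ltn_trans h iK); rewrite ltnn.
exact: measurable0.
Qed.

Lemma meas_tau_le l : gmeas l [set w | (tau w <= l)%N].
Proof.
elim: l => [|l IH].
  have -> : [set w | (tau w <= 0)%N] = [set w | tau w == 0%N].
    by apply/seteqP; split => w /=; rewrite leqn0.
  exact: meas_tau_eq.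
have -> : [set w | (tau w <= l.+1)%N] = [set w | (tau w <= l)%N] `|` [set w | tau w == l.+1].
  apply/seteqP; split => w /=; first by rewrite leq_eqVlt ltnS => /orP[->|->]; [right|left].
  by case=> [h|/eqP ->//]; exact: leqW.
apply: measurableU; first exact: gmeas_mono IH.
exact: meas_tau_eq.
Qed.

Lemma meas_tau_gt l : gmeas l [set w | (l < tau w)%N].
Proof.
have -> : [set w | (l < tau w)%N] = ~` [set w | (tau w <= l)%N].
  apply/seteqP; split => w /=; rewrite ltnNge; first by move/negP.
  by move=> h; apply/negP.
apply: measurableC; exact: meas_tau_le.
Qed.


Lemma FMk k : F k `<=` measurable.
Proof. exact: (@FM _ _ _ hF k). Qed.

Lemma Lpkm j k f : (j <= k)%N -> Lpk j f -> Lpk k f.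
Proof. exact: (@Lpk_mono _ _ _ P p F hF j k f). Qed.

Lemma Lp_ext G (f g : T -> R) : (forall w, f w = g w) -> Lp_in P p G g -> Lp_in P p G f.
Proof. by move=> /funext ->. Qed.

Lemma Lp_addf k (f g : T -> R) : Lpk k f -> Lpk k g -> Lpk k (fun w => f w + g w).
Proof. by move=> Lf Lg; exact (Lp_add p1 (@FMk k) Lf Lg). Qed.

Lemma Lp_subf k (f g : T -> R) : Lpk k f -> Lpk k g -> Lpk k (fun w => f w - g w).
Proof. by move=> Lf Lg; exact (Lp_add p1 (@FMk k) Lf (Lp_opp p1 (@FMk k) Lg)). Qed.

Lemma H_Lp : Lpk K H.
Proof.
apply: (@Lp_ext _ _ (fun w => \sum_(m <- index_iota 0 K.+1) (tau w == m)%:R * Hm m w)).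
  move=> w; rewrite hH (eq_bigr (fun m => Hm m w * (tau w == m)%:R)) => [|m _]; last by rewrite mulrC.
  by rewrite sum_ind tau_le mul1r.
apply: (Lp_sum p1 (@FMk _)) => m; rewrite mem_index_iota ltnS => /andP[_ mK].
apply: (Lp_bool_mul p1 (@FMk _)); first exact: meas_tau_eq.
have := @Lpk_mono _ _ _ P p F hF m K (Hm m) mK. apply. exact: hHm.
Qed.

Lemma dxi_Lp l : (l < K)%N -> Lpk l.+1 (fun w => xi l w * (S l.+1 w - S l w)).
Proof. by move=> lK; case: hadm => h _; case: (h l lK). Qed.

Lemma dxih_Lp i l : (i <= l)%N -> (l < K)%N -> Lpk l.+1 (fun w => xih i l w * (S l.+1 w - S l w)).
Proof.
move=> il lK; case: hadm => _ h.
by case: (h i (leq_ltn_trans il lK) l); rewrite ?il.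
Qed.

Lemma wealth_Lp (z : nat -> nat -> T -> R) :
  (forall i l, (i <= l)%N -> (l < K)%N -> Lpk l.+1 (fun w => z i l w * (S l.+1 w - S l w))) ->
  Lpk K (fun w => H w - wealth S K p0 tau xi z w).
Proof.
move=> hz.
apply: (@Lp_ext _ _ (fun w => H w - (p0 + \sum_(l <- index_iota 0 K)
   ((l < tau w)%N%:R * (xi l w * (S l.+1 w - S l w)) +
    \sum_(i <- index_iota 0 l.+1) (tau w == i)%:R * (z i l w * (S l.+1 w - S l w)))))).
  move=> w; rewrite /wealth /gains; congr (_ - (_ + _)); apply: eq_bigr => l _.
  rewrite /position mulrDl mulr_suml; congr (_ + _); first by ring.
  by apply: eq_bigr => i _; ring.
apply: Lp_subf; first exact: H_Lp.
apply: Lp_addf; first exact: Lp_cst.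
apply: (Lp_sum p1 (@FMk _)) => l; rewrite mem_index_iota => /andP[_ lK].
apply: Lp_addf.
  apply: (Lp_bool_mul p1 (@FMk _)); first exact: gmeas_mono (ltnW lK) (@meas_tau_gt l).
  exact: Lpkm lK (dxi_Lp lK).
apply: (Lp_sum p1 (@FMk _)) => i; rewrite mem_index_iota ltnS => /andP[_ il].
apply: (Lp_bool_mul p1 (@FMk _)); first exact: meas_tau_eq (leq_trans il (ltnW lK)).
exact: Lpkm lK (hz i l il lK).
Qed.

Definition zm m : nat -> nat -> T -> R := fun i k w => if (i < m)%N then xih i k w else 0.
Definition V m : T -> R := fun w => H w - wealth S K p0 tau xi (zm m) w.
Definition Xm m : T -> R := fun w => Hm m w - p0 - \sum_(0 <= l < m) xi l w * (S l.+1 w - S l w).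

Lemma V_Lp m : Lpk K (V m).
Proof.
apply: wealth_Lp => i l il lK; rewrite /zm; case im: (i < m)%N.
  exact: dxih_Lp.
apply: (@Lp_ext _ _ (fun _ => 0)); last exact: Lp_cst.
by move=> w; rewrite mul0r.
Qed.

Lemma split_sum m (f g : nat -> R) : (m <= K)%N ->
  \sum_(0 <= l < K) ((l < m)%N%:R * f l + (m <= l)%N%:R * g l) =
  \sum_(0 <= l < m) f l + \sum_(m <= l < K) g l.
Proof.
move=> mK; rewrite (@big_cat_nat _ _ _ m 0 K _ _ (leq0n m) mK); congr (_ + _); apply: eq_big_nat => l /andP[h1 h2].
  by rewrite h2 leqNgt h2 /= mul1r mul0r addr0.
by rewrite ltnNge h1 /= mul1r mul0r add0r.
Qed.

Lemma V_ne m w : tau w != m -> V m.+1 w = V m w.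
Proof.
move=> ne; rewrite /V /wealth /gains; congr (_ - (_ + _)); apply: eq_bigr => l _.
have hm : (tau w < m.+1)%N = (tau w < m)%N by rewrite ltnS leq_eqVlt (negbTE ne).
by rewrite !pos_eq /zm hm.
Qed.

Lemma V_eq m w : (m <= K)%N -> tau w = m -> V m w = Xm m w.
Proof.
move=> mK e; rewrite /V /Xm /wealth /gains hH e.
rewrite (eq_bigr (fun l => (l < m)%N%:R * (xi l w * (S l.+1 w - S l w)) + (m <= l)%N%:R * 0)); last first.
  by move=> l _; rewrite pos_eq /zm e ltnn; ring.
rewrite split_sum // sumr_const_nat mul0rn addr0; ring.
Qed.

Lemma V_eq1 m w : (m <= K)%N -> tau w = m -> V m.+1 w = Xm m w -
  \sum_(m <= l < K) xih m l w * (S l.+1 w - S l w).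
Proof.
move=> mK e; rewrite /V /Xm /wealth /gains hH e.
rewrite (eq_bigr (fun l => (l < m)%N%:R * (xi l w * (S l.+1 w - S l w)) +
   (m <= l)%N%:R * (xih m l w * (S l.+1 w - S l w)))); last first.
  by move=> l _; rewrite pos_eq /zm e ltnSn; ring.
rewrite split_sum //; ring.
Qed.


Lemma aeand (A B : T -> Prop) : (\forall w \ae P, A w) -> (\forall w \ae P, B w) ->
  \forall w \ae P, A w /\ B w.
Proof. exact: ae2. Qed.

Lemma gains_Lp m (eta : nat -> T -> R) : admissible_from P p F S m K eta ->
  Lpk K (fun w => - gains S eta m K w).
Proof.
move=> adm.
have L0 : Lpk K (fun w => \sum_(l <- index_iota m K) eta l w * (S l.+1 w - S l w)).
  apply: (Lp_sum p1 (@FMk K)) => l; rewrite mem_index_iota => /andP[ml lK].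
  by case: (adm l); [rewrite ml lK | move=> _ h; exact: Lpkm lK h].
exact (Lp_opp p1 (@FMk K) L0).
Qed.

Lemma rc_gains_ge0 m (eta : nat -> T -> R) : (m < K)%N -> admissible_from P p F S m K eta ->
  Defs.ae_le P (fun _ => 0) (rc m K (fun w => - gains S eta m K w)).
Proof.
move=> mK adm.
have [L hL] := hbmr mK.
have LG := gains_Lp adm.
have hn : forall n : nat, \forall w \ae P,
    L w <= n%:R * rc m K (fun w => - gains S eta m K w) w.
  move=> n.
  pose eta_n := fun l w => n%:R * eta l w.
  have adm_n : admissible_from P p F S m K eta_n.
    move=> l hl; case: (adm l hl) => me Le; split.
      exact: measurable_funM (measurable_cst _) me.
    apply: (@Lp_ext _ _ ((fun _ => n%:R) \* (fun w => eta l w * (S l.+1 w - S l w)))).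
      by move=> w; rewrite /eta_n /= mulrA.
    apply: (Lp_bdd_mul p1 (@FMk _) (measurable_cst _) (M := n%:R)) => // w.
    by rewrite normr_nat.
  have h1 := hL eta_n adm_n.
  have e : (fun w => - gains S eta_n m K w) =
           (fun _ => n%:R) \* (fun w => - gains S eta m K w).
    apply/funext => w; rewrite /gains /eta_n /= mulrN mulr_sumr; congr (- _).
    by apply: eq_bigr => l _; ring.
  rewrite e in h1.
  have h2 := rc_scale p1 hF hrk (leqnn K) (ltnW mK) LG (measurable_cst (n%:R : R))
    (fun _ => ler0n _ _) (ex_intro (fun M : R => forall w : T, n%:R <= M) n%:R (fun _ => lexx _)).
  by apply: ae2 h1 h2 => w a b; apply: (le_trans a); rewrite b.
have := ae_foralln hn.
apply: ae1 => w hw; rewrite leNgt; apply/negP => rneg.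
move: hw; set r := rc m K _ w; move=> hw.
have ry : 0 < - r by rewrite oppr_gt0.
have := truncnS_gt (`|L w| / - r); set n := (Num.trunc _).+1 => hlt.
rewrite ltr_pdivrMr // mulrN in hlt.
have h3 := hw n.
have h4 : - L w <= `|L w| by rewrite -normrN ler_norm.
have : - L w < - L w.
  apply: le_lt_trans h4 _; apply: lt_le_trans hlt _; by rewrite lerN2.
by rewrite ltxx.
Qed.


Lemma Xm_Lp m : (m <= K)%N -> Lpk m (Xm m).
Proof.
move=> mK; apply: Lp_subf; first by apply: Lp_subf; [exact: hHm|exact: Lp_cst].
apply: (Lp_sum p1 (@FMk m)) => l; rewrite mem_index_iota => /andP[_ lm].
exact: Lpkm lm (dxi_Lp (leq_trans lm mK)).
Qed.

Lemma step m : (m < K)%N -> Defs.ae_le P (rc m K (V m)) (rc m K (V m.+1)).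
Proof.
move=> mK.
pose a := fun w => (tau w == m)%:R : R.
pose b := fun w => 1 - a w.
have ma : meas_in (F m) a := meas_bool (meas_tau_eq (leqnn m)).
have mb : meas_in (F m) b := measurable_funB (measurable_cst _) ma.
have a0 : forall w, 0 <= a w by move=> w; rewrite /a; case: (tau w == m).
have b0 : forall w, 0 <= b w by move=> w; rewrite /b /a; case: (tau w == m); rewrite /= ?subrr ?subr0.
have aM : exists M : R, forall w, a w <= M.
  by exists 1 => w; rewrite /a; case: (tau w == m).
have bM : exists M : R, forall w, b w <= M.
  by exists 1 => w; rewrite /b /a; case: (tau w == m); rewrite /= ?subrr ?subr0.
have LX := Xm_Lp (ltnW mK).
have LaX : Lpk m (a \* Xm m) by exact (Lp_bool_mul p1 (@FMk m) (meas_tau_eq (leqnn m)) LX).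
pose eta := fun l w => a w * xih m l w.
have adm_eta : admissible_from P p F S m K eta.
  move=> l /andP[ml lK]; split.
    have mx : meas_in (F l) (xih m l).
      by case: hadm => _ h; case: (h m mK l); rewrite ?ml ?lK.
    exact: (measurable_funM (meas_k_mono hF ml ma) mx).
  apply: (@Lp_ext _ _ (fun w => (tau w == m)%:R * (xih m l w * (S l.+1 w - S l w)))).
    by move=> w; rewrite /eta /a mulrA.
  apply: (Lp_bool_mul p1 (@FMk _)); first exact: meas_tau_eq (leqW ml).
  exact: dxih_Lp.
pose G := fun w => - gains S eta m K w.
have LG : Lpk K G := gains_Lp adm_eta.
have G0 := rc_gains_ge0 mK adm_eta.
have LZ := V_Lp m.+1.
have LY := V_Lp m.
have L0 : Lpk K (fun _ => 0) := Lp_cst P p1 _ 0.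
have eZ : a \* V m.+1 = G \+ (a \* Xm m).
  apply/funext => w; rewrite /= /a /G /gains /eta /a; case: eqP => e.
    rewrite V_eq1 ?(ltnW mK) // !mul1r.
    rewrite [X in _ = - X + _](eq_bigr (fun l => xih m l w * (S l.+1 w - S l w))); last first.
      by move=> l _; rewrite mul1r.
    ring.
  under eq_bigr do rewrite !mul0r.
  by rewrite sumr_const_nat mul0rn oppr0 !mul0r addr0.
have eY : a \* V m = (fun _ => 0) \+ (a \* Xm m).
  apply/funext => w; rewrite /= /a; case: eqP => e.
    by rewrite V_eq ?(ltnW mK) // add0r.
  by rewrite !mul0r addr0.
have ebZ : b \* V m.+1 = b \* V m.
  apply/funext => w; rewrite /= /b /a; case: eqP => e.
    by rewrite subrr !mul0r.
  by rewrite V_ne //; apply/eqP.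
have EK := leqnn K.
have jE := ltnW mK.
have s1 := rc_scale p1 hF hrk EK jE LZ ma a0 aM.
have s2 := rc_scale p1 hF hrk EK jE LY ma a0 aM.
have s3 := rc_scale p1 hF hrk EK jE LZ mb b0 bM.
have s4 := rc_scale p1 hF hrk EK jE LY mb b0 bM.
have t1 := rc_transl p1 hF hrk EK jE LG LaX.
have t2 := rc_transl p1 hF hrk EK jE L0 LaX.
have z0 := rc_scale p1 hF hrk EK jE L0 (measurable_cst (0 : R)) (fun _ => lexx _)
  (ex_intro (fun M : R => forall w : T, 0 <= M) 0 (fun _ => lexx _)).
have e0 : (cst (0 : R)) \* (fun _ : T => 0 : R) = (fun _ => 0).
  by apply/funext => w; rewrite /= mul0r.
rewrite e0 in z0.
rewrite eZ in s1; rewrite eY in s2; rewrite ebZ in s3.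
have := aeand s1 (aeand s2 (aeand s3 (aeand s4 (aeand t1 (aeand t2 (aeand z0 G0)))))).
apply: ae1 => w [h1 [h2 [h3 [h4 [h5 [h6 [h7 h8]]]]]]].
move: h1 h2 h3 h4 h5 h6 h7 h8 => /=.
set rZ := rc m K (V m.+1) w; set rY := rc m K (V m) w.
set rG := rc m K G w; set r0 := rc m K (fun _ => 0) w.
move=> h1 h2 h3 h4 h5 h6 h7 h8.
have eab : a w + b w = 1 by rewrite /b addrC subrK.
have -> : rY = a w * rY + b w * rY by rewrite -mulrDl eab mul1r.
have -> : rZ = a w * rZ + b w * rZ by rewrite -mulrDl eab mul1r.
rewrite -h1 -h2 -h3 h4 h5 h6 h7 mul0r add0r lerD2r.
by rewrite lerDr.
Qed.


Lemma rc_split' j m E X : (j <= m)%N -> (m <= E)%N -> rc j E X = rc j m (rc m E X).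
Proof.
move=> jm mE; rewrite /rho_comp.
have -> : (E - j = (m - j) + (E - m))%N by lia.
by rewrite iotaD foldr_cat subnKC.
Qed.

Lemma main_le : Defs.ae_le P (rc 0 K (V 0)) (rc 0 K (V K)).
Proof.
suff h : forall m, (m <= K)%N -> Defs.ae_le P (rc 0 K (V 0)) (rc 0 K (V m)) by exact: h.
elim=> [_|m IH mK]; first by apply: aeT => w.
have st := step mK.
have L1 := rc_Lp hrk (leqnn K) (ltnW mK) (V_Lp m).
have L2 := rc_Lp hrk (leqnn K) (ltnW mK) (V_Lp m.+1).
have h := rc_mono hrk (ltnW mK) (leq0n m) L1 L2 st.
rewrite -!rc_split' ?(ltnW mK) // in h.
by apply: ae2 (IH (ltnW mK)) h => w; apply: le_trans.
Qed.

Lemma main_rho (rho : (T -> R) -> (T -> R)) :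
  (forall X, Lpk K X -> Defs.ae_eq P (rho X) (rc 0 K X)) ->
  Defs.ae_le P (rho (fun w => H w - wealth S K p0 tau xi no_post_exercise w))
               (rho (fun w => H w - wealth S K p0 tau xi xih w)).
Proof.
move=> hdec.
have e0 : (fun w => H w - wealth S K p0 tau xi no_post_exercise w) = V 0.
  rewrite /V; have -> : zm 0 = no_post_exercise by [].
  by [].
have eK : (fun w => H w - wealth S K p0 tau xi xih w) = V K.
  apply/funext => w; rewrite /V /wealth /gains; congr (_ - (_ + _)).
  apply: eq_big_nat => l /andP[_ lK]; congr (_ * _); rewrite /position; congr (_ + _).
  apply: eq_big_nat => i /andP[_ il]; rewrite /zm.
  by rewrite (leq_ltn_trans (il : (i <= l)%N) lK).
rewrite e0 eK.
have h1 := hdec _ (V_Lp 0).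
have h2 := hdec _ (V_Lp K).
have := aeand h1 (aeand h2 main_le).
by apply: ae1 => w [-> [-> h]].
Qed.

End Main.



Theorem corollary1 (d : measure_display) (T : measurableType d) (R : realType)
  (P : probability T R) (p : \bar R) (F : nat -> set (set T)) (K : nat)
  (S : nat -> T -> R) (U : Type) (Y : nat -> T -> U) (Fp : R -> U -> R)
  (rhow rhob : (T -> R) -> (T -> R)) :
  (1 <= p)%E ->
  is_filtration F ->
  (forall k, (k <= K)%N -> Lp_in P p (F k) (S k)) ->
  (forall k, (k <= K)%N -> Lp_in P p (F k) (fun w => Fp (S k w) (Y k w))) ->
  (* writer: with or without commitment (the inequality holds for every tau) *)
  (good_risk_measure P p F S K rhow ->
     forall (p0 : R) (tau : T -> nat) xi xih,
       stopping_time F K tau -> admissible_strategy P p F S K xi xih ->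
       ae_le P
         (rhow (fun w => payoff_at Fp S Y K tau w - wealth S K p0 tau xi no_post_exercise w))
         (rhow (fun w => payoff_at Fp S Y K tau w - wealth S K p0 tau xi xih w))) /\
  (* buyer *)
  (good_risk_measure P p F S K rhob ->
     forall (p0 : R) (tau : T -> nat) xi xih,
       stopping_time F K tau -> admissible_strategy P p F S K xi xih ->
       ae_le P
         (rhob (fun w => - payoff_at Fp S Y K tau w - wealth S K p0 tau xi no_post_exercise w))
         (rhob (fun w => - payoff_at Fp S Y K tau w - wealth S K p0 tau xi xih w))).
Proof.
move=> hp hF hS hFp.
have hpay : forall (tau : T -> nat), stopping_time F K tau -> forall w,
    payoff_at Fp S Y K tau w = Fp (S (tau w) w) (Y (tau w) w).
  move=> tau ht w; rewrite /payoff_at.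
  rewrite (eq_bigr (fun k => Fp (S k w) (Y k w) * (tau w == k)%:R)) => [|k _]; last by rewrite mulrC.
  by rewrite sum_ind; case: ht => ->; rewrite mul1r.
split.
- move=> [rk [[hrk hdec] hb]] p0 tau xi xih ht ha.
  exact: (main_rho hp hF hrk hb p0 ht ha (Hm := fun m w => Fp (S m w) (Y m w)) hFp (hpay tau ht) hdec).
- move=> [rk [[hrk hdec] hb]] p0 tau xi xih ht ha.
  have hHm : forall m, (m <= K)%N -> Lp_in P p (F m) (fun w => - Fp (S m w) (Y m w)).
    move=> m mK; exact (Lp_opp hp (FM hF (k:=m)) (hFp m mK)).
  have hH : forall w, - payoff_at Fp S Y K tau w = - Fp (S (tau w) w) (Y (tau w) w).
    by move=> w; rewrite hpay.
  exact: (main_rho hp hF hrk hb p0 ht ha (H := fun w => - payoff_at Fp S Y K tau w)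
           (Hm := fun m w => - Fp (S m w) (Y m w)) hHm hH hdec).
Qed.
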